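(* Let $P_{\mathrm{lo}}(m)=\sum_{\mathbf n:\,n_K=m}P(\mathbf n)$ be the marginal of the lowest level $K$. Then for all integers $n\ge0$, $$P(0,\dots,0,n)=(1-r)\,\delta_{n0}+(1-\delta_{n0})\,r_K\,P_{\mathrm{lo}}(n-1);$$ equivalently, for $z\in[0,1]$, $\sum_{n\ge0}P(0,\dots,0,n)z^n=1-r+r_K\,z\sum_{m\ge0}P_{\mathrm{lo}}(m)z^m$.
   Context: Fix integers $c\ge 1$, $K\ge 2$ and reals $r_1,\dots,r_K>0$ with $r=\sum_{k=1}^K r_k<1$ (here $r_k=\lambda_k/(c\mu)$ for an M/M/$c$ queue with $K$ non-preemptive priority levels, level 1 the highest). Write $\mathbf e_\kappa$ for the standard unit vectors of $\mathbb Z^K$, $\delta_{ij}$ for the Kronecker delta. Consider the equations for $(p_{\mathbf n})_{\mathbf n\in\mathbb N_0^K}$, with the convention $p_{\mathbf n}=0$ if some component of $\mathbf n$ is negative: $$(1+r)p_{\mathbf n}=\Big(\prod_{j=1}^K\delta_{0n_j}\Big)p_{\mathbf n}+\sum_{\kappa=1}^K\Big[r_\kappa p_{\mathbf n-\mathbf e_\kappa}+\Big(\prod_{j=1}^{\kappa-1}\delta_{0n_j}\Big)p_{\mathbf n+\mathbf e_\kappa}\Big],\quad \mathbf n\in\mathbb N_0^K .$$ These are the stationary balance equations for the states in which all $c$ servers are busy and $n_\kappa$ clients of level $\kappa$ wait in the queue; their nonnegative summable solutions form a one-dimensional cone, and $P$ denotes the unique solution with $\sum_{\mathbf n}P(\mathbf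 n)=1$. *)

(* Defs.v *)
From HB Require Import structures.
From mathcomp Require Import all_boot all_order all_algebra.
From mathcomp Require Import all_classical all_reals all_analysis.
Set Implicit Arguments. Unset Strict Implicit. Unset Printing Implicit Defensive.
Import Order.TTheory GRing.Theory Num.Theory.
Local Open Scope ring_scope.
Local Open Scope classical_set_scope.

(* A queue state: level k (0-based, 'I_K) has n k waiting clients.
   Level 0 is the highest priority, the level with index K.-1 the lowest. *)
Definition state (K : nat) := {ffun 'I_K -> nat}.

Definition incr (K : nat) (n : state K) (k : 'I_K) : state K :=
  [ffun j => n j + (j == k)]%N.
(* n - e_k (only meaningful when n k > 0) *)
Definition decr (K : nat) (n : state K) (k : 'I_K) : state K :=
  [ffun j => n j - (j == k)]%N.

(* p_{n - e_k}, with the convention p = 0 at states with a negative component *)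
Definition p_minus (R : realType) (K : nat) (p : state K -> R) (n : state K)
  (k : 'I_K) : R :=
  if (0 < n k)%N then p (decr n k) else 0.

Definition delta0 (R : realType) (m : nat) : R := (m == 0)%:R.

Definition balance (R : realType) (K : nat) (r : 'I_K -> R)
  (p : state K -> R) : Prop :=
  forall n : state K,
    (1 + \sum_(k < K) r k) * p n =
      (\prod_(j < K) delta0 R (n j)) * p n
      + \sum_(k < K) (r k * p_minus p n k
                      + (\prod_(j < K | (j < k)%N) delta0 R (n j)) * p (incr n k)).

Definition lastlev (K : nat) (hK : (1 < K)%N) : 'I_K :=
  @Ordinal K K.-1 (eq_ind_r is_true (ltnW hK) (ltn_predL K)).
Arguments lastlev : clear implicits.

Definition lowstate (K : nat) (hK : (1 < K)%N) (m : nat) : state K :=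
  [ffun j => if j == lastlev K hK then m else 0%N].

Definition Plow (R : realType) (K : nat) (hK : (1 < K)%N) (P : state K -> R)
  (m : nat) : R :=
  fine (\esum_(n in [set n : state K | n (lastlev K hK) = m]) (P n)%:E).

(* Main.v *)
Require Import Defs.
From HB Require Import structures.
From mathcomp Require Import all_boot all_order all_algebra.
From mathcomp Require Import all_classical all_reals all_analysis.
From mathcomp Require Import zify ring lra.
Import Order.TTheory GRing.Theory Num.Theory.
Local Open Scope ring_scope.
Local Open Scope classical_set_scope.

Lemma esumZ (R : realType) (T : choiceType) (S : set T) (c : R) (a : T -> \bar R) :
  0 <= c -> (forall x, (0 <= a x)%E) ->
  \esum_(i in S) (c%:E * a i)%E = (c%:E * \esum_(i in S) a i)%E.
Proof.
move=> c0 a0; rewrite /esum -ereal_supZl //; last first.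
  apply/set0P; exists 0%E; exists set0; first exact: fsets_set0.
  by rewrite fsbig_set0.
congr ereal_sup; rewrite image_comp; apply: eq_imagel => A _ /=.
by rewrite ge0_mule_fsumr.
Qed.

Lemma inSP (T : Type) (A : set T) x : reflect (A x) (x \in A).
Proof. by apply: (iffP idP); [exact: set_mem | exact: mem_set]. Qed.
Arguments inSP {T} A x.

Section Pf.
Variables (R : realType) (K : nat) (P : state K -> R).
Hypothesis P0 : forall n, 0 <= P n.
Hypothesis Ptot : \esum_(n in [set: state K]) (P n)%:E = 1%E.

Definition E (S : set (state K)) := \esum_(n in S) (P n)%:E.
Definition e S := fine (E S).

Lemma E_ge0 S : (0 <= E S)%E.
Proof. by apply: esum_ge0 => x _; rewrite lee_fin. Qed.

Lemma E_le1 S : (E S <= 1)%E.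
Proof.
rewrite -Ptot /E esum_mkcond; apply: le_esum => i _.
by case: ifP => _; rewrite ?lee_fin.
Qed.

Lemma E_fin S : E S \is a fin_num.
Proof.
by rewrite ge0_fin_numE ?E_ge0 // (le_lt_trans (E_le1 S)) // ltry.
Qed.

Lemma EE S : E S = (e S)%:E.
Proof. by rewrite /e fineK // E_fin. Qed.

Lemma e_ge0 S : 0 <= e S.
Proof. by rewrite -lee_fin -EE E_ge0. Qed.

Lemma e_split S B : e S = e (S `&` B) + e (S `&` ~` B).
Proof.
apply: EFin_inj; rewrite EFinD -!EE /E (esumID B) //.
by move=> i _; rewrite lee_fin.
Qed.

Lemma eT : e [set: state K] = 1.
Proof. by apply: EFin_inj; rewrite -EE. Qed.


Definition zst : state K := [ffun _ => 0%N].
Definition preb (n : state K) (k : 'I_K) := [forall (j : 'I_K | (j < k)%N), n j == 0%N].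
Definition A (S : set (state K)) k :=
  [set n : state K | (0 < n k)%N /\ preb n k /\ S (decr n k)].
Definition U S := [set n | exists k, A S k n].

Lemma prod_delta (n : state K) (Q : pred 'I_K) :
  \prod_(j < K | Q j) delta0 R (n j) = [forall (j | Q j), n j == 0%N]%:R.
Proof.
case: (boolP [forall (j | Q j), n j == 0%N]) => [/forall_inP H | /forall_inPn [j Qj nj]].
  by rewrite big1 // => j Qj; rewrite /delta0 H.
by rewrite (bigD1 j) //= /delta0 (negPf nj) mul0r.
Qed.

Lemma allz (n : state K) : [forall j, n j == 0%N] = (n == zst).
Proof.
apply/forallP/eqP => [H|->]; last by move=> j; rewrite ffunE.
by apply/ffunP => j; rewrite ffunE; apply/eqP.
Qed.

Lemma decr_incr (n : state K) k : decr (incr n k) k = n.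
Proof. by apply/ffunP => j; rewrite !ffunE addnK. Qed.

Lemma incr_decr (n : state K) k : (0 < n k)%N -> incr (decr n k) k = n.
Proof.
move=> h; apply/ffunP => j; rewrite !ffunE; case: eqP => [->|_]; last by rewrite subn0 addn0.
by rewrite subnK.
Qed.

Lemma incr_inj (k : 'I_K) : injective (fun n : state K => incr n k).
Proof. by move=> a b /(congr1 (fun m => decr m k)); rewrite /= !decr_incr. Qed.

Lemma A_uniq S k1 k2 (n : state K) : A S k1 n -> A S k2 n -> k1 = k2.
Proof.
move=> [p1 [q1 _]] [p2 [q2 _]]; apply/val_inj/eqP; rewrite eqn_leq; apply/andP; split;
 rewrite leqNgt; apply/negP => lt.
  by move/forall_inP: q1 => /(_ _ lt) /eqP e; rewrite e in p2.
by move/forall_inP: q2 => /(_ _ lt) /eqP e; rewrite e in p1.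
Qed.

Lemma first_nz (n : state K) : n != zst -> exists k, (0 < n k)%N /\ preb n k.
Proof.
move=> nz; have [k0 pk0] : exists k, (0 < n k)%N.
  case: (boolP [exists k, 0 < n k]%N) => [/existsP // | /existsPn h].
  case/eqP: nz; apply/ffunP => j; rewrite ffunE; move: (h j).
  by rewrite lt0n negbK => /eqP.
case: (@arg_minnP _ k0 (fun k : 'I_K => 0 < n k)%N (fun k : 'I_K => val k) pk0) => k pk mink.
exists k; split => //; apply/forall_inP => j jk; apply/negPn/negP => nj.
have := mink j; rewrite lt0n nj => /(_ isT); by rewrite leqNgt jk.
Qed.

Definition tot (n : state K) := (\sum_(j < K) n j)%N.

Lemma tot_incr (n : state K) k : tot (incr n k) = (tot n + 1)%N.
Proof.
rewrite /tot (bigD1 k) //= [X in _ = (X + _)%N](bigD1 k) //= ffunE eqxx.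
rewrite (eq_bigr (fun j => n j)); first by rewrite /=; lia.
by move=> j jk; rewrite ffunE (negPf jk) addn0.
Qed.

Lemma tot_decr (n : state K) k : (0 < n k)%N -> tot (decr n k) = (tot n - 1)%N.
Proof.
move=> h; rewrite /tot (bigD1 k) //= [X in _ = (X - _)%N](bigD1 k) //= ffunE eqxx.
rewrite (eq_bigr (fun j => n j)); first by rewrite /=; lia.
by move=> j jk; rewrite ffunE (negPf jk) subn0.
Qed.

Lemma tot0 : tot zst = 0%N.
Proof. by rewrite /tot big1 // => j _; rewrite ffunE. Qed.

Lemma e_set0 : e set0 = 0.
Proof. by rewrite /e /E esum_set0. Qed.

Lemma e_set1 x : e [set x] = P x.
Proof. by rewrite /e /E esum_set1 // lee_fin. Qed.

Variable r : 'I_K -> R.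
Hypothesis r0 : forall k, 0 < r k.
Hypothesis bal : balance r P.

Let f n := (P n)%:E.

Lemma cut (S : set (state K)) :
  (1 + \sum_(k < K) r k) * e S =
  e (S `&` [set zst]) + \sum_(k < K) r k * e [set n | S (incr n k)] + e (U S).
Proof.
have g_ge0 : forall n, (0 <= f n)%E by move=> n; rewrite lee_fin.
pose g0 n := if n \in [set zst] then f n else 0%E.
pose g1 k n := if n \in [set m : state K | (0 < m k)%N] then f (decr n k) else 0%E.
pose g2 k n := if n \in [set m : state K | preb m k] then f (incr n k) else 0%E.
have pt n : ((1 + \sum_(k < K) r k) * P n)%:E = (g0 n + \sum_(k < K) ((r k)%:E * g1 k n + g2 k n))%E.
  rewrite bal EFinD -sumEFin; congr (_ + _)%E.
    rewrite prod_delta allz /g0; case: inSP => [/= ->|h]; first by rewrite eqxx mul1r.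
    by case: eqP => [e|_]; [case: h; rewrite e | rewrite mul0r].
  apply: eq_bigr => k _; rewrite EFinD EFinM; congr (_ * _ + _)%E.
    rewrite /g1 /p_minus; case: inSP => /= h; first by rewrite h.
    by move: h; case: ltnP.
  rewrite /g2 prod_delta; case: inSP => /= h; rewrite /preb in h.
    by rewrite h mul1r.
  by move/negP/negbTE: h ->; rewrite mul0r.
have rs0 : 0 <= 1 + \sum_(k < K) r k.
  by apply: addr_ge0 => //; apply: sumr_ge0 => k _; apply: ltW.
have g0p n : (0 <= g0 n)%E by rewrite /g0; case: ifP.
have g1p k n : (0 <= g1 k n)%E by rewrite /g1; case: ifP.
have g2p k n : (0 <= g2 k n)%E by rewrite /g2; case: ifP.
have H : ((1 + \sum_(k < K) r k)%:E * E S)%E =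
   \esum_(i in S) (g0 i + (\sum_(k < K) ((r k)%:E * g1 k i + g2 k i)%E)%R)%E.
  rewrite /E -esumZ //.
  by apply: eq_esum => n _; rewrite -EFinM pt.
rewrite esumD // in H; last first.
  by move=> i _; apply: sume_ge0 => k _; apply: adde_ge0 => //; apply: mule_ge0 => //; rewrite lee_fin ltW.
rewrite esum_sum in H; last by move=> i k _ _; apply: adde_ge0 => //; apply: mule_ge0 => //; rewrite lee_fin ltW.
have e0 : \esum_(i in S) g0 i = E (S `&` [set zst]) by rewrite /E esum_mkcondr.
have e1 k : \esum_(i in S) g1 k i = E [set n | S (incr n k)].
  rewrite /g1 -esum_mkcondr (reindex_esum [set n | S (incr n k)] _ (fun n => incr n k)).
    by apply: eq_esum => n _; rewrite decr_incr.
  split => [n /= h | a b _ _ | m [Sm pm]].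
  - by split => //; rewrite ffunE eqxx addn1.
  - exact: incr_inj.
  - by exists (decr m k); rewrite /= incr_decr.
have e2 k : \esum_(i in S) g2 k i = E (A S k).
  rewrite /g2 -esum_mkcondr -(esum_image _ (fun n => incr n k)); last first.
    by move=> a b _ _; exact: incr_inj.
  rewrite /E; congr esum; apply/seteqP; split => [_ [n [Sn pn] <-] | m [pm [qm Sm]]].
    split; first by rewrite ffunE eqxx addn1.
    split; last by rewrite decr_incr.
    apply/forall_inP => j jk; rewrite ffunE.
    have -> : (j == k) = false by apply/negbTE; rewrite neq_ltn jk.
    by rewrite addn0; move/forall_inP: pn => /(_ j jk).
  exists (decr m k); last by rewrite incr_decr.
  split => //=; apply/forall_inP => j jk; rewrite ffunE.
  by move/forall_inP: qm => /(_ j jk) /eqP ->.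
have e3 : \sum_(k < K) E (A S k) = E (U S).
  rewrite /E; under eq_bigr do rewrite esum_mkcond.
  rewrite -esum_sum; last by move=> i k _ _; case: ifP => _ //; rewrite lee_fin.
  rewrite [RHS]esum_mkcond; apply: eq_esum => n _.
  case: (inSP (U S) n) => [[k0 Ak0]|nU].
    rewrite (bigD1 k0) //= big1 ?adde0; first by rewrite (mem_set Ak0).
    move=> k kk0; case: inSP => // Ak; case/negP: kk0; apply/eqP.
    by apply: A_uniq; [exact: Ak | exact: Ak0].
  by rewrite big1 // => k _; case: inSP => // Ak; case: nU; exists k.
have H2 : \sum_(k < K) \esum_(i in S) ((r k)%:E * g1 k i + g2 k i)%E =
    \sum_(k < K) ((r k)%:E * E [set n | S (incr n k)] + E (A S k))%E.
  apply: eq_bigr => k _; rewrite esumD //; last by move=> i _; apply: mule_ge0 => //; rewrite lee_fin ltW.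
  by rewrite esumZ ?e1 ?e2 // ltW.
rewrite H2 e0 big_split /= e3 in H.
move: H; rewrite (EE (S `&` [set zst])) (EE (U S)) (EE S) -EFinM.
have H3 : \sum_(i < K) ((r i)%:E * E [set n | S (incr n i)])%E =
   (\sum_(i < K) r i * e [set n | S (incr n i)])%:E.
  by rewrite -sumEFin; apply: eq_bigr => i _; rewrite EE EFinM.
by rewrite H3 -!EFinD => -[] ->; rewrite addrA.
Qed.

Lemma low_eq (hK : (1 < K)%N) (m : nat) : (0 < m)%N ->
  P (lowstate hK m) = r (lastlev K hK) * e [set n : state K | n (lastlev K hK) = m.-1].
Proof.
move=> m0.
set lk := lastlev K hK.
set L := [set n : state K | n lk = m.-1].
set S := [set n : state K | (m <= n lk)%N].
have c := cut S.
have h0 : S `&` [set zst] = set0.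
  apply/seteqP; split => // n [/= Sn zn]; move: Sn; rewrite zn /S /= /zst ffunE; lia.
have hX k : k != lk -> [set n | S (incr n k)] = S.
  move=> kl; apply/seteqP; split => n; rewrite /S /= ffunE eq_sym (negPf kl) addn0 //.
have hXl : e [set n | S (incr n lk)] = e S + e L.
  rewrite (e_split _ S); congr (e _ + e _); apply/seteqP; split => n; rewrite /S /L /= ?ffunE ?eqxx /=.
  - by case.
  - move=> h; split => //; lia.
  - by case => h1 /negP h2; lia.
  - move=> h; split; first by lia.
    by apply/negP; lia.
have vlk : val lk = K.-1 by [].
have hU : U S = S `&` ~` [set lowstate hK m].
  apply/seteqP; split => n.
  - case=> k [pk [qk Sk]]; rewrite /S /= ffunE in Sk.
    case: (eqVneq lk k) => [ek|nk] in Sk *.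
      split; first by rewrite /S /=; lia.
      move=> /= nl; move: Sk; rewrite nl ffunE eqxx /=; lia.
    split; first by rewrite /S /=; lia.
    move=> /= nl; move: pk; rewrite nl ffunE eq_sym (negPf nk); lia.
  - case=> Sn nl.
    have nz : n != zst by apply/eqP => nz; move: Sn; rewrite nz /S /= ffunE; lia.
    have [k [pk qk]] := first_nz _ nz.
    exists k; split => //; split => //; rewrite /S /= ffunE.
    case: (eqVneq lk k) => [ek|nk]; last by rewrite /= subn0; exact: Sn.
    rewrite -ek in pk qk *; rewrite /=.
    have : n lk != m.
      apply/eqP => nm; apply: nl; apply/ffunP => j; rewrite ffunE.
      case: eqP => [->|jl] //.
      have jlk : (j < lk)%N.
        have : (nat_of_ord j != nat_of_ord lk) by apply/eqP => /val_inj.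
        have := ltn_ord j; have : nat_of_ord lk = K.-1 by [].
        lia.
      by move/forall_inP: qk => /(_ j jlk) /eqP.
    by move: Sn; rewrite /S /=; lia.
have hS : e S = P (lowstate hK m) + e (U S).
  rewrite (e_split S [set lowstate hK m]) hU; congr (_ + _).
  have -> : S `&` [set lowstate hK m] = [set lowstate hK m].
    apply/seteqP; split => n; first by case.
    by move=> /= ->; split => //; rewrite /S /= ffunE eqxx.
  exact: e_set1.
have hsum : \sum_(k < K) r k * e [set n | S (incr n k)] =
    (\sum_(k < K) r k) * e S + r lk * e L.
  rewrite (bigD1 lk) //= hXl [in RHS]mulr_suml [in RHS](bigD1 lk) //=.
  rewrite (eq_bigr (fun k => r k * e S)); last by move=> k kk; rewrite hX.
  ring.
rewrite h0 e_set0 hsum in c.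
lra.
Qed.

Lemma tot_eq (k : nat) : (0 < k)%N ->
  e [set n | tot n = k] = (\sum_(j < K) r j) * e [set n | tot n = k.-1].
Proof.
move=> k0.
set S := [set n : state K | (k <= tot n)%N].
have c := cut S.
have h0 : S `&` [set zst] = set0.
  apply/seteqP; split => // n [/= Sn zn]; move: Sn; rewrite zn /S /= tot0; lia.
have hX j : e [set n | S (incr n j)] = e S + e [set n | tot n = k.-1].
  rewrite (e_split _ S); congr (e _ + e _); apply/seteqP; split => n; rewrite /S /= ?tot_incr.
  - by case.
  - move=> h; split => //; lia.
  - by case => h1 /negP h2; lia.
  - move=> h; split; first by lia.
    by apply/negP; lia.
have hU : U S = S `&` ~` [set n | tot n = k].
  apply/seteqP; split => n.
  - case=> j [pj [qj Sj]]; rewrite /S /= tot_decr // in Sj.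
    by split; rewrite /S /=; lia.
  - case=> Sn nT.
    have nz : n != zst by apply/eqP => nz; move: Sn; rewrite nz /S /= tot0; lia.
    have [j [pj qj]] := first_nz _ nz.
    exists j; split => //; split => //; rewrite /S /= tot_decr //.
    by move: Sn nT; rewrite /S /=; lia.
have hS : e S = e [set n | tot n = k] + e (U S).
  rewrite (e_split S [set n | tot n = k]) hU; congr (e _ + _).
  apply/seteqP; split => n; first by case.
  by move=> /= h; split => //; rewrite /S /=; lia.
have hsum : \sum_(j < K) r j * e [set n | S (incr n j)] =
    (\sum_(j < K) r j) * (e S + e [set n | tot n = k.-1]).
  rewrite mulr_suml; apply: eq_bigr => j _; by rewrite hX.
rewrite h0 e_set0 hsum !mulrDr !mulrDl !mul1r in c.
lra.
Qed.

Lemma tot_zst (n : state K) : tot n = 0%N -> n = zst.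
Proof.
move=> h; apply/ffunP => j; rewrite ffunE; move: h; rewrite /tot (bigD1 j) //=; lia.
Qed.

Lemma p0 : P zst = 1 - \sum_(k < K) r k.
Proof.
have hT j : E [set n | tot n = j.+1] = ((\sum_(k < K) r k)%:E * E [set n | tot n = j])%E.
  by rewrite !EE tot_eq // EFinM.
have hU1 : [set: state K] `&` ~` [set zst] = \bigcup_j [set n : state K | tot n = j.+1].
  apply/seteqP; split => n.
    case=> _ nz; exists (tot n).-1 => //=.
    have : tot n <> 0%N by move=> /tot_zst.
    lia.
  case=> j _ /= tj; split => // /= nz; by rewrite nz tot0 in tj.
have hU0 : [set: state K] = \bigcup_j [set n : state K | tot n = j].
  by apply/seteqP; split => n // _; exists (tot n).
have hE : E ([set: state K] `&` ~` [set zst]) = (\sum_(k < K) r k)%:E.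
  rewrite hU1 /E nneseries_sum_bigcup //; last first.
    by move=> i j _ _ [n [/= -> []]].
  rewrite (eq_eseriesr (g := fun j => ((\sum_(k < K) r k)%:E * E [set n | tot n = j])%E)); last first.
    by move=> j _; exact: hT.
  rewrite nneseriesZl; last by move=> i _; exact: E_ge0.
  rewrite /E -nneseries_sum_bigcup //; last first.
    by move=> i j _ _ [n [/= -> ->]].
  by rewrite -hU0 Ptot mule1.
have := eT; rewrite (e_split _ [set zst]) setTI e_set1.
have -> : e ([set: state K] `&` ~` [set zst]) = \sum_(k < K) r k by rewrite /e hE.
lra.
Qed.

End Pf.

Theorem mainTheorem6 (R : realType) (K : nat) (hK : (1 < K)%N)
  (r : 'I_K -> R) (P : state K -> R) :
  (forall k, 0 < r k) ->
  \sum_(k < K) r k < 1 ->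
  (forall n, 0 <= P n) ->
  (\esum_(n in [set: state K]) (P n)%:E = 1%E) ->
  balance r P ->
  forall m : nat,
    P (lowstate hK m) =
      (1 - \sum_(k < K) r k) * delta0 R m
      + (1 - delta0 R m) * r (lastlev K hK) * Plow hK P m.-1.
Proof.
move=> r0 rlt P0 Ptot bal m.
case: m => [|m].
  have -> : lowstate hK 0 = zst K by apply/ffunP => j; rewrite !ffunE; case: ifP.
  rewrite (@p0 _ _ _ P0 Ptot _ r0 bal) /delta0 /=.
  by rewrite mulr1 subrr mul0r mul0r addr0.
rewrite (@low_eq _ _ _ P0 Ptot _ r0 bal hK m.+1 isT) /delta0 /=.
by rewrite mulr0 add0r subr0 mul1r.
Qed.
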